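(* Let $n\ge1$ and $\vec p,\vec q\in[0,1]^n$. Let $S_{\vec p}$ be a sum of $n$ independent random variables $X_i\sim\mathrm{Ber}(p_i)$, and similarly $S_{\vec q}$, with variances $\sigma_{\vec p}^2=\sum_ip_i(1-p_i)$ and $\sigma_{\vec q}^2=\sum_iq_i(1-q_i)$, and let $\Delta=\sum_{i=1}^n|p_i-q_i|$. Then $$\mathrm{TV}(S_{\vec p},S_{\vec q})\le\frac{2C_{\mathrm{BCV}}\,\Delta}{\sqrt{\sigma_{\vec p}^2+1}+\sqrt{\sigma_{\vec q}^2+1}}.$$
   Context: $\mathrm{TV}(P,Q)=\frac12\sum_\omega|P(\omega)-Q(\omega)|$ is the total variation distance of laws. $\eta_{\mathrm{BCV}}$ is the sharp Baillon–Cominetti–Vaisman constant: the smallest constant such that every finite sum $Z$ of independent Bernoulli random variables with $\mathrm{Var}(Z)>0$ satisfies $\max_k\mathbb P(Z=k)\le\eta_{\mathrm{BCV}}/\sqrt{\mathrm{Var}(Z)}$ ($\eta_{\mathrm{BCV}}\approx0.4688$). $C_{\mathrm{BCV}}=\sqrt{5/4+\eta_{\mathrm{BCV}}^2}$. *)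

(* Defs.v *)
From HB Require Import structures.
From mathcomp Require Import all_boot all_order all_algebra.
From mathcomp Require Import classical_sets reals.
Set Implicit Arguments. Unset Strict Implicit. Unset Printing Implicit Defensive.
Import Order.TTheory GRing.Theory Num.Theory.
Local Open Scope ring_scope.
Local Open Scope classical_set_scope.

(* Law of S_p = X_1 + ... + X_n with X_i ~ Ber(p_i) independent:
   the joint law of (X_1,...,X_n) is the product measure on {0,1}^n,
   and P(S_p = k) is the mass of the outcomes x with sum_i x_i = k. *)
Definition pbin {R : realType} {n : nat} (p : 'I_n -> R) (k : nat) : R :=
  \sum_(x : {ffun 'I_n -> bool} | (\sum_(i < n) nat_of_bool (x i) == k)%N)
     \prod_(i < n) (if x i then p i else 1 - p i).

Definition pvar {R : realType} {n : nat} (p : 'I_n -> R) : R :=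
  \sum_(i < n) p i * (1 - p i).

(* Total variation distance between the laws of S_p and S_q
   (both supported on {0,...,n}). *)
Definition TV_pb {R : realType} {n : nat} (p q : 'I_n -> R) : R :=
  2^-1 * \sum_(k < n.+1) `|pbin p k - pbin q k|.

Definition pmax {R : realType} {n : nat} (p : 'I_n -> R) : R :=
  \big[Num.max/0]_(k < n.+1) pbin p k.

(* eta_BCV: the smallest constant eta such that every finite sum Z of
   independent Bernoullis with Var Z > 0 satisfies
   max_k P(Z=k) <= eta / sqrt(Var Z); i.e. the supremum of
   max_k P(Z=k) * sqrt(Var Z) over all such Z. *)
Definition eta_BCV {R : realType} : R :=
  sup [set x : R | exists (m : nat) (p : 'I_m -> R),
         (forall i, 0 <= p i <= 1) /\ 0 < pvar p /\
         x = pmax p * Num.sqrt (pvar p)].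

Definition C_BCV {R : realType} : R :=
  Num.sqrt (5 / 4 + (@eta_BCV R) ^+ 2).

(* Main.v *)
Require Import Defs.
From HB Require Import structures.
From mathcomp Require Import all_boot all_order all_algebra.
From mathcomp Require Import classical_sets reals.
From mathcomp Require Import ring lra.
Import Order.TTheory GRing.Theory Num.Theory.
Local Open Scope ring_scope.
Set Implicit Arguments. Unset Strict Implicit. Unset Printing Implicit Defensive.

Definition prevf {R : realType} (c : nat -> R) (k : nat) : R :=
  if k is k'.+1 then c k' else 0.

Definition Fp {R : realType} (a : R) : {poly R} := a *: 'X + (1 - a)%:P.
Definition PL {R : realType} (s : seq R) : {poly R} := \prod_(a <- s) Fp a.
Definition lw {R : realType} (s : seq R) (k : nat) : R := (PL s)`_k.
Definition varL {R : realType} (s : seq R) : R := \sum_(a <- s) a * (1 - a).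
Definition inI {R : realType} (s : seq R) := forall a, a \in s -> 0 <= a <= 1.

Lemma sum_prev {R : realType} (c : nat -> R) N :
  \sum_(k < N.+1) prevf c k = \sum_(k < N) c k.
Proof. by rewrite big_ord_recl /= add0r. Qed.

Lemma coef_FpM {R : realType} (a : R) (P : {poly R}) k :
  (Fp a * P)`_k = (1 - a) * P`_k + a * prevf (fun k => P`_k) k.
Proof.
rewrite /Fp mulrDl -scalerAl coefD coefZ coefXM coefCM addrC.
by case: k.
Qed.

Lemma lw_nil {R : realType} k : lw ([::] : seq R) k = (k == 0)%:R.
Proof. by rewrite /lw /PL big_nil coef1. Qed.

Lemma lw_cons {R : realType} (a : R) s k :
  lw (a :: s) k = (1 - a) * lw s k + a * prevf (lw s) k.
Proof. by rewrite /lw /PL big_cons coef_FpM. Qed.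

Lemma lw_big {R : realType} (s : seq R) k : (size s < k)%N -> lw s k = 0.
Proof.
elim: s k => [|a s IH] k /= hk.
  by rewrite lw_nil; case: k hk.
rewrite lw_cons IH ?(ltn_trans _ hk) //; case: k hk => [//|k] hk /=.
by rewrite IH //; lra.
Qed.

Lemma inI_cons {R : realType} (a : R) s : inI (a :: s) -> 0 <= a <= 1 /\ inI s.
Proof.
move=> h; split; first by apply: h; rewrite inE eqxx.
by move=> b hb; apply: h; rewrite inE hb orbT.
Qed.

Lemma lw_ge0 {R : realType} (s : seq R) k : inI s -> 0 <= lw s k.
Proof.
elim: s k => [|a s IH] k hs; first by rewrite lw_nil; case: (k == 0).
case/inI_cons: hs => /andP[a0 a1] hs.
rewrite lw_cons; apply: addr_ge0; apply: mulr_ge0; rewrite ?subr_ge0 ?IH //.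
by case: k => //= k; apply: IH.
Qed.

Lemma lw_sum {R : realType} (s : seq R) N : inI s -> (size s < N)%N ->
  \sum_(k < N) lw s k = 1.
Proof.
elim: s N => [|a s IH] N hs hN.
  case: N hN => // N _; rewrite big_ord_recl lw_nil /= big1 ?addr0 //.
  by move=> i _; rewrite lw_nil.
case/inI_cons: hs => _ hs.
case: N hN => // N hN.
under eq_bigr do rewrite lw_cons.
rewrite big_split /= -!mulr_sumr sum_prev !IH //; last by rewrite (ltn_trans _ hN).
by rewrite !mulr1 subrK.
Qed.

Lemma lw_le1 {R : realType} (s : seq R) k : inI s -> lw s k <= 1.
Proof.
move=> hs; case: (ltnP (size s) k) => hk; first by rewrite lw_big.
rewrite -(lw_sum (N := (size s).+1) hs) //.
have hk' : (k < (size s).+1)%N by [].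
rewrite (bigD1 (Ordinal hk')) //= lerDl; apply: sumr_ge0 => i _; exact: lw_ge0.
Qed.

Lemma pbin_poly {R : realType} n (p : 'I_n -> R) k :
  pbin p k = (\prod_(i < n) Fp (p i))`_k.
Proof.
pose G (i : 'I_n) (b : bool) : {poly R} :=
  (if b then p i else 1 - p i)%:P * 'X^(nat_of_bool b).
have -> : \prod_(i < n) Fp (p i) = \prod_(i < n) \sum_(b : bool) G i b.
  apply: eq_bigr => i _; rewrite big_bool /G /= expr1 expr0 mulr1 /Fp.
  by rewrite mul_polyC.
rewrite bigA_distr_bigA /= coef_sum /pbin.
rewrite [in LHS]big_mkcond /=; apply: eq_bigr => x _.
rewrite /G big_split /= -rmorph_prod prodrXr coefCM coefXn.
by rewrite eq_sym; case: eqP => _; rewrite ?mulr1 ?mulr0.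
Qed.

Lemma prod_ord_PL {R : realType} n (p : 'I_n -> R) :
  \prod_(i < n) Fp (p i) = PL [seq p i | i <- enum 'I_n].
Proof. by rewrite /PL big_map big_enum. Qed.

Lemma PL_nth {R : realType} (s : seq R) :
  \prod_(i < size s) Fp (nth 0 s i) = PL s.
Proof. by rewrite /PL (big_nth 0) big_mkord. Qed.

Lemma varL_nth {R : realType} (s : seq R) :
  pvar (fun i : 'I_(size s) => nth 0 s i) = varL s.
Proof. by rewrite /pvar /varL (big_nth 0) big_mkord. Qed.

Lemma PL_perm {R : realType} (s t : seq R) : perm_eq s t -> PL s = PL t.
Proof. by move=> h; rewrite /PL (perm_big _ h). Qed.

Lemma varL_perm {R : realType} (s t : seq R) : perm_eq s t -> varL s = varL t.
Proof. by move=> h; rewrite /varL (perm_big _ h). Qed.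

Lemma PL_cat {R : realType} (s t : seq R) : PL (s ++ t) = PL s * PL t.
Proof. by rewrite /PL big_cat. Qed.

Lemma varL_cat {R : realType} (s t : seq R) : varL (s ++ t) = varL s + varL t.
Proof. by rewrite /varL big_cat. Qed.

Lemma varL_cons {R : realType} (a : R) s : varL (a :: s) = a * (1 - a) + varL s.
Proof. by rewrite /varL big_cons. Qed.

Lemma g_le {R : realType} (a : R) : a * (1 - a) <= 4^-1.
Proof. have : 0 <= (a - 2^-1)^+2 by apply: sqr_ge0. lra. Qed.

Lemma g_ge0 {R : realType} (a : R) : 0 <= a <= 1 -> 0 <= a * (1 - a).
Proof. move=> /andP[h0 h1]; apply: mulr_ge0; lra. Qed.

Lemma varL_ge0 {R : realType} (s : seq R) : inI s -> 0 <= varL s.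
Proof.
elim: s => [|a s IH] hs; first by rewrite /varL big_nil.
case/inI_cons: hs => ha hs; rewrite varL_cons; apply: addr_ge0; [exact: g_ge0|exact: IH].
Qed.

Lemma inI_perm {R : realType} (s t : seq R) : perm_eq s t -> inI s -> inI t.
Proof. by move=> h hs a; rewrite -(perm_mem h); apply: hs. Qed.

Lemma inI_cat {R : realType} (s t : seq R) : inI (s ++ t) -> inI s /\ inI t.
Proof. by move=> h; split=> a ha; apply: h; rewrite mem_cat ha ?orbT. Qed.

Lemma balanced_split {R : realType} (s : seq R) : inI s ->
  exists s1 s2, perm_eq s (s1 ++ s2) /\ `|varL s1 - varL s2| <= 4^-1.
Proof.
elim: s => [|a s IH] hs.
  by exists [::], [::]; split => //; rewrite /varL !big_nil subrr normr0; lra.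
case/inI_cons: hs => ha /IH [s1 [s2 [hp hv]]].
have hg := g_ge0 ha; have hg' := g_le a.
case: (lerP (varL s1) (varL s2)) => h.
  exists (a :: s1), s2; split; first by rewrite /= perm_cons.
  rewrite varL_cons; move: hv; rewrite !ler_norml; lra.
exists s1, (a :: s2); split.
  by rewrite perm_sym -(cat1s a s2) perm_catCA /= perm_cons perm_sym.
rewrite varL_cons; move: hv; rewrite !ler_norml; lra.
Qed.

Lemma sum_ext {R : realType} (c : nat -> R) M N : (M <= N)%N ->
  (forall k, (M <= k)%N -> c k = 0) -> \sum_(k < N) c k = \sum_(k < M) c k.
Proof.
move=> hMN hc; rewrite -!(big_mkord xpredT c) (big_cat_nat (leq0n M) hMN) /=.
rewrite [X in _ + X]big1_seq ?addr0 // => k /andP[_].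
by rewrite mem_index_iota => /andP[hk _]; exact: hc.
Qed.

Lemma sum_le_ext {R : realType} (c : nat -> R) M N : (M <= N)%N ->
  (forall k, 0 <= c k) -> \sum_(k < M) c k <= \sum_(k < N) c k.
Proof.
move=> hMN hc; rewrite -!(big_mkord xpredT c) (big_cat_nat (leq0n M) hMN) /=.
by rewrite lerDl; apply: sumr_ge0 => k _; exact: hc.
Qed.

Definition QL {R : realType} (s : seq R) : R := \sum_(k < (size s).+1) lw s k ^+ 2.
Definition DL {R : realType} (s : seq R) : R :=
  \sum_(k < (size s).+2) (lw s k - prevf (lw s) k) ^+ 2.

Lemma QL_ext {R : realType} (s : seq R) N : (size s < N)%N ->
  \sum_(k < N) lw s k ^+ 2 = QL s.
Proof.
move=> hN; rewrite /QL (@sum_ext _ (fun k => lw s k ^+ 2) (size s).+1) //.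
by move=> k hk; rewrite lw_big // expr0n.
Qed.

Lemma QL_ge0 {R : realType} (s : seq R) : 0 <= QL s.
Proof. by apply: sumr_ge0 => k _; apply: sqr_ge0. Qed.

Lemma QL_cons {R : realType} (a : R) s :
  QL (a :: s) = QL s - a * (1 - a) * DL s.
Proof.
set c := lw s; set N := (size s).+2.
have E : forall k, lw (a :: s) k ^+ 2 =
   (1 - a)^+2 * c k ^+ 2 + a ^+ 2 * prevf (fun k => c k ^+ 2) k
   + (2 * a * (1 - a)) * (c k * prevf c k).
  by move=> k; rewrite lw_cons /c; case: k => [|k] /=; ring.
have E2 : forall k, (c k - prevf c k) ^+ 2 =
   c k ^+ 2 + prevf (fun k => c k ^+ 2) k - 2 * (c k * prevf c k).
  by move=> k; case: k => [|k] /=; ring.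
rewrite /QL /DL /= -/N -/c; under eq_bigr do rewrite E.
rewrite (eq_bigr _ (fun (k : 'I_N) _ => E2 k)).
rewrite !big_split /=.
rewrite sumrN -!mulr_sumr /N sum_prev.
have hq : forall M, (size s < M)%N -> \sum_(k < M) c k ^+ 2 = QL s by move=> M hM; rewrite QL_ext.
rewrite !hq // /QL -/c.
set S := \sum_(i < N) _; set Q := \sum_(k < _) _; ring.
Qed.

Lemma argmax_ex {R : realType} (c : nat -> R) N :
  exists m, (m <= N)%N /\ forall k, (k <= N)%N -> c k <= c m.
Proof.
elim: N => [|N [m [hm hmax]]]; first by exists 0%N; split=> // k; rewrite leqn0 => /eqP->.
case: (lerP (c N.+1) (c m)) => h.
  exists m; split; first by rewrite (leq_trans hm).
  by move=> k; rewrite leq_eqVlt => /orP[/eqP->//|]; rewrite ltnS; apply: hmax.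
exists N.+1; split => // k; rewrite leq_eqVlt => /orP[/eqP->//|].
by rewrite ltnS => /hmax hk; apply: (le_trans hk); apply: ltW.
Qed.

Lemma QL_le_max {R : realType} (s : seq R) : inI s ->
  exists m, QL s <= lw s m /\ lw s m <= 1.
Proof.
move=> hs; have [m [hm hmax]] := argmax_ex (lw s) (size s).
exists m; split; last exact: lw_le1.
have -> : QL s <= lw s m = (QL s <= \sum_(k < (size s).+1) lw s k * lw s m).
  by rewrite -mulr_suml lw_sum // mul1r.
apply: ler_sum => k _; rewrite expr2; apply: ler_wpM2l; first exact: lw_ge0.
by apply: hmax; rewrite -ltnS.
Qed.

Lemma QL_le1 {R : realType} (s : seq R) : inI s -> QL s <= 1.
Proof. by move=> hs; have [m [h1 h2]] := QL_le_max hs; apply: le_trans h2. Qed.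

Lemma nash {R : realType} (s : seq R) : inI s -> QL s ^+ 3 <= 4 * DL s.
Proof.
move=> hs; set Q := QL s; set c := lw s; set N := (size s).+2.
have c0 : forall k, 0 <= c k by move=> k; apply: lw_ge0.
have p0 : forall k, 0 <= prevf c k by case=> //= k.
have [m [hm hmax]] := argmax_ex c (size s).
have hQm : Q <= c m.
  have -> : Q <= c m = (Q <= \sum_(k < (size s).+1) c k * c m).
    by rewrite -mulr_suml lw_sum // mul1r.
  apply: ler_sum => k _; rewrite expr2; apply: ler_wpM2l => //.
  by apply: hmax; rewrite -ltnS.
have Q0 : 0 <= Q by apply: QL_ge0.
pose T := \sum_(k < N) `|c k - prevf c k| * (c k + prevf c k).
have hT : c m ^+ 2 <= T.
  pose f := prevf (fun k => c k ^+ 2).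
  have -> : c m ^+ 2 = \sum_(0 <= k < m.+1) (f k.+1 - f k).
    by rewrite telescope_sumr // /f /= subr0.
  rewrite big_mkord.
  rewrite /T; apply: (@le_trans _ _ (\sum_(k < m.+1) `|c k - prevf c k| * (c k + prevf c k))); last first.
    apply: (@sum_le_ext _ (fun k => `|c k - prevf c k| * (c k + prevf c k)) m.+1 N).
    - by rewrite /N ltnS ltnW // ltnS.
    - move=> k; apply: mulr_ge0; [exact: normr_ge0|exact: addr_ge0].
  apply: ler_sum => k _.
  have -> : f k.+1 - f k = (c k - prevf c k) * (c k + prevf c k).
    by rewrite /f; case: (nat_of_ord k) => [|j] /=; ring.
  apply: ler_wpM2r; [exact: addr_ge0|exact: ler_norm].
have hQT : Q * T <= 2 * DL s + Q ^+ 3 / 2.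
  have hE : \sum_(k < N) (c k + prevf c k) ^+ 2 <= 4 * Q.
    apply: le_trans (_ : \sum_(k < N) (2 * c k ^+ 2 + 2 * prevf (fun k => c k ^+ 2) k) <= _).
      apply: ler_sum => k _; case: (nat_of_ord k) => [|j] /=.
        have := sqr_ge0 (c 0%N); lra.
      have := sqr_ge0 (c j.+1 - c j); lra.
    rewrite big_split /= -!mulr_sumr /N sum_prev QL_ext // QL_ext // -/Q; lra.
  rewrite /T mulr_sumr.
  apply: le_trans (_ : \sum_(k < N) (2 * (c k - prevf c k) ^+ 2
                     + Q ^+ 2 / 8 * (c k + prevf c k) ^+ 2) <= _).
    apply: ler_sum => k _.
    set d := c k - prevf c k; set e := c k + prevf c k.
    have hd : `|d| ^+ 2 = d ^+ 2 by rewrite real_normK // num_real.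
    have := sqr_ge0 (2 * `|d| - Q * e / 2).
    have := normr_ge0 d; nra.
  rewrite big_split /= -!mulr_sumr /DL.
  have := hE; nra.
have hQ2 : Q ^+ 2 <= c m ^+ 2 by rewrite ler_sqr // ?nnegrE //; apply: le_trans hQm.
nra.
Qed.

Lemma QL_nil {R : realType} : QL ([::] : seq R) = 1.
Proof. by rewrite /QL big_ord1 lw_nil /= expr1n. Qed.

Lemma QL_bound {R : realType} (s : seq R) : inI s ->
  QL s ^+ 2 * (1 + varL s / 2) <= 1.
Proof.
elim: s => [|a s IH] hs.
  by rewrite QL_nil /varL big_nil; lra.
have hs' := hs; case/inI_cons: hs' => ha hs1.
have IH1 := IH hs1.
rewrite QL_cons varL_cons.
set Q := QL s; set D := DL s; set v := varL s; set g := a * (1 - a).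
have hg0 : 0 <= g by apply: g_ge0.
have hg1 : g <= 4^-1 by apply: g_le.
have hN : Q ^+ 3 <= 4 * D by apply: nash.
have hQ0 : 0 <= Q by apply: QL_ge0.
have hQ1 : Q <= 1 by apply: QL_le1.
have hv : 0 <= v by apply: varL_ge0.
have hQ'0 : 0 <= Q - g * D.
  by have := QL_ge0 (a :: s); rewrite QL_cons.
set x := g * Q ^+ 2 / 4.
have hx0 : 0 <= x by rewrite /x; apply: divr_ge0 => //; apply: mulr_ge0 => //; apply: sqr_ge0.
have hQ2 : Q ^+ 2 <= 1 by rewrite -(expr1n _ 2) ler_sqr // nnegrE.
have hx1 : x <= 1 by rewrite /x; nra.
have h1 : Q - g * D <= Q * (1 - x) by rewrite /x; nra.
have h2 : (Q - g * D) ^+ 2 <= Q ^+ 2 * (1 - x) ^+ 2.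
  rewrite -exprMn ler_sqr // nnegrE //; apply: mulr_ge0 => //; lra.
have h3 : (1 - x) ^+ 2 * (1 + 2 * x) <= 1.
  have : 0 <= x ^+ 2 * (3 - 2 * x) by apply: mulr_ge0; [apply: sqr_ge0|lra].
  nra.
have h4 : Q ^+ 2 * (g / 2) = 2 * x by rewrite /x; field.
have h5 : 0 <= (1 - x) ^+ 2 by apply: sqr_ge0.
apply: le_trans (_ : Q ^+ 2 * (1 - x) ^+ 2 * (1 + (g + v) / 2) <= _).
  apply: ler_wpM2r => //; lra.
have -> : Q ^+ 2 * (1 - x) ^+ 2 * (1 + (g + v) / 2) =
   (1 - x) ^+ 2 * (Q ^+ 2 * (1 + v / 2)) + (1 - x) ^+ 2 * (Q ^+ 2 * (g / 2)) by ring.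
rewrite h4.
apply: le_trans h3.
have : (1 - x) ^+ 2 * (Q ^+ 2 * (1 + v / 2)) <= (1 - x) ^+ 2 * 1 by apply: ler_wpM2l.
lra.
Qed.

Lemma sum_rev_sq {R : realType} (c : nat -> R) k :
  \sum_(j < k.+1) c (k - j)%N = \sum_(j < k.+1) c j.
Proof.
rewrite -(big_mkord xpredT (fun j => c (k - j)%N)) -(big_mkord xpredT c) big_nat_rev /=.
apply: eq_big_nat => i /andP[_ hi].
by rewrite add0n subSS subKn // -ltnS.
Qed.

Lemma QL_part {R : realType} (s : seq R) k :
  \sum_(j < k.+1) lw s j ^+ 2 <= QL s.
Proof.
rewrite -(@QL_ext _ s (k.+1 + (size s).+1)); last by rewrite addnS ltnS leq_addl.
apply: (@sum_le_ext _ (fun j => lw s j ^+ 2)); first by rewrite leq_addr.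
by move=> j; apply: sqr_ge0.
Qed.

Lemma lw_sq_var {R : realType} (s : seq R) k : inI s -> lw s k ^+ 2 * varL s <= 8.
Proof.
move=> hs; have [s1 [s2 [hp hv]]] := balanced_split hs.
have [hs1 hs2] := inI_cat (inI_perm hp hs).
have hl0 := lw_ge0 k hs; have hl1 := lw_le1 k hs.
rewrite (varL_perm hp) varL_cat.
have hv1 := varL_ge0 hs1; have hv2 := varL_ge0 hs2.
have hB1 := QL_bound hs1; have hB2 := QL_bound hs2.
have hlk : lw s k <= (QL s1 + QL s2) / 2.
  rewrite /lw (PL_perm hp) PL_cat coefM -/(lw s1) -/(lw s2).
  apply: le_trans (_ : \sum_(j < k.+1) (lw s1 j ^+ 2 + lw s2 (k - j)%N ^+ 2) / 2 <= _).
    apply: ler_sum => j _.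
    rewrite -/(lw s1 j) -/(lw s2 (k - j)%N).
    have := sqr_ge0 (lw s1 j - lw s2 (k - j)%N); nra.
  rewrite -mulr_suml big_split /=.
  rewrite (sum_rev_sq (fun j => lw s2 j ^+ 2)).
  have := QL_part s1 k; have := QL_part s2 k; lra.
set v1 := varL s1 in hv hv1 hB1 *; set v2 := varL s2 in hv hv2 hB2 *.
set Q1 := QL s1 in hlk hB1 *; set Q2 := QL s2 in hlk hB2 *.
have hQ10 : 0 <= Q1 by apply: QL_ge0.
have hQ20 : 0 <= Q2 by apply: QL_ge0.
case: (lerP (v1 + v2) (2^-1)) => hvs.
  have : lw s k ^+ 2 <= 1 by rewrite -(expr1n _ 2) ler_sqr // nnegrE.
  nra.
have hv1' : (v1 + v2) / 4 <= v1 by move: hv; rewrite ler_norml; lra.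
have hv2' : (v1 + v2) / 4 <= v2 by move: hv; rewrite ler_norml; lra.
have hQ1' : Q1 ^+ 2 * (1 + (v1 + v2) / 8) <= 1.
  apply: le_trans hB1; apply: ler_wpM2l; [apply: sqr_ge0|lra].
have hQ2' : Q2 ^+ 2 * (1 + (v1 + v2) / 8) <= 1.
  apply: le_trans hB2; apply: ler_wpM2l; [apply: sqr_ge0|lra].
have hsq : lw s k ^+ 2 <= (Q1 ^+ 2 + Q2 ^+ 2) / 2.
  apply: le_trans (_ : ((Q1 + Q2) / 2) ^+ 2 <= _).
    by rewrite ler_sqr // nnegrE //; lra.
  have := sqr_ge0 (Q1 - Q2); lra.
have : lw s k ^+ 2 * (1 + (v1 + v2) / 8) <= 1.
  apply: le_trans (_ : (Q1 ^+ 2 + Q2 ^+ 2) / 2 * (1 + (v1 + v2) / 8) <= _).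
    apply: ler_wpM2r => //; lra.
  lra.
have := sqr_ge0 (lw s k); nra.
Qed.

Lemma bigmax_le_gen {R : realType} N (F : 'I_N -> R) B : 0 <= B ->
  (forall i, F i <= B) -> \big[Num.max/0]_(i < N) F i <= B.
Proof.
move=> hB hF; apply: (big_ind (fun x => x <= B)) => //.
by move=> x y hx hy; rewrite ge_max hx hy.
Qed.

Lemma bigmax_ge0 {R : realType} N (F : 'I_N -> R) : 0 <= \big[Num.max/0]_(i < N) F i.
Proof.
apply: (big_rec (fun x => 0 <= x)) => // i x _ hx.
by rewrite le_max hx orbT.
Qed.

Lemma bigmax_ge_term {R : realType} N (F : 'I_N -> R) i :
  F i <= \big[Num.max/0]_(i < N) F i.
Proof. by rewrite (bigD1 i) //= le_max lexx. Qed.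

Lemma pbin_lw {R : realType} m (p : 'I_m -> R) k :
  pbin p k = lw [seq p i | i <- enum 'I_m] k.
Proof. by rewrite pbin_poly prod_ord_PL. Qed.

Lemma pvar_varL {R : realType} m (p : 'I_m -> R) :
  pvar p = varL [seq p i | i <- enum 'I_m].
Proof. by rewrite /pvar /varL big_map big_enum. Qed.

Lemma inI_map {R : realType} m (p : 'I_m -> R) :
  (forall i, 0 <= p i <= 1) -> inI [seq p i | i <- enum 'I_m].
Proof. by move=> h a /mapP [i _ ->]. Qed.

Lemma eta_set_bounded {R : realType} :
  has_sup [set x : R | exists (m : nat) (p : 'I_m -> R),
         (forall i, 0 <= p i <= 1) /\ 0 < pvar p /\
         x = pmax p * Num.sqrt (pvar p)].
Proof.
split.
  exists (pmax (fun _ : 'I_1 => (2^-1 : R)) * Num.sqrt (pvar (fun _ : 'I_1 => (2^-1 : R)))).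
  exists 1%N, (fun _ => 2^-1); split; first by move=> _; apply/andP; split; lra.
  by split => //; rewrite /pvar big_ord1; lra.
exists 3 => x [m [p [hp [hv ->]]]].
set v := pvar p.
have hs := inI_map hp.
have hsv : 0 < Num.sqrt v by rewrite sqrtr_gt0.
have hsq : Num.sqrt v ^+ 2 = v by rewrite sqr_sqrtr // ltW.
rewrite -ler_pdivlMr //; apply: bigmax_le_gen.
  by apply: divr_ge0 => //; apply: ltW.
move=> k; rewrite ler_pdivlMr // pbin_lw.
have h8 := lw_sq_var k hs; rewrite -pvar_varL -/v in h8.
have h0 := lw_ge0 k hs.
set l := lw _ k in h8 h0 *.
have : (l * Num.sqrt v) ^+ 2 <= 9 by rewrite exprMn hsq; lra.
have : 0 <= l * Num.sqrt v by apply: mulr_ge0 => //; apply: ltW.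
nra.
Qed.

Lemma lw_eta {R : realType} (s : seq R) k : inI s -> 0 < varL s ->
  lw s k * Num.sqrt (varL s) <= eta_BCV.
Proof.
move=> hs hv.
pose p := fun i : 'I_(size s) => nth 0 s i.
have hp : forall i, 0 <= p i <= 1.
  by move=> i; apply: hs; rewrite mem_nth.
have hpv : pvar p = varL s by rewrite varL_nth.
have hE := eta_set_bounded (R := R).
have hx : lw s k * Num.sqrt (varL s) <= pmax p * Num.sqrt (pvar p).
  rewrite hpv; apply: ler_wpM2r; first exact: sqrtr_ge0.
  case: (ltnP (size s) k) => hk.
    by rewrite lw_big //; apply: bigmax_ge0.
  have hk' : (k < (size s).+1)%N by [].
  have -> : lw s k = pbin p (Ordinal hk') by rewrite pbin_poly PL_nth.
  exact: (bigmax_ge_term (fun k : 'I_(size s).+1 => pbin p k)).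
apply: le_trans hx _.
apply: (sup_upper_bound hE).
by exists (size s), p; split => //; split => //; rewrite hpv.
Qed.

Lemma CBCV_sq {R : realType} : (@C_BCV R) ^+ 2 = 5 / 4 + eta_BCV ^+ 2.
Proof.
rewrite /C_BCV sqr_sqrtr //; apply: addr_ge0; [lra|apply: sqr_ge0].
Qed.

Lemma CBCV_ge0 {R : realType} : 0 <= (@C_BCV R).
Proof. exact: sqrtr_ge0. Qed.

Lemma lw_C {R : realType} (s : seq R) k : inI s ->
  lw s k ^+ 2 * (varL s + 5 / 4) <= C_BCV ^+ 2.
Proof.
move=> hs; rewrite CBCV_sq.
have h0 := lw_ge0 k hs; have h1 := lw_le1 k hs.
have hv0 := varL_ge0 hs.
have hl2 : lw s k ^+ 2 <= 1 by rewrite -(expr1n _ 2) ler_sqr // nnegrE.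
have he := sqr_ge0 (@eta_BCV R).
case: (ltrP 0 (varL s)) => hv.
  have := lw_eta k hs hv.
  have hsq : Num.sqrt (varL s) ^+ 2 = varL s by rewrite sqr_sqrtr.
  have hs0 : 0 <= lw s k * Num.sqrt (varL s) by apply: mulr_ge0 => //; apply: sqrtr_ge0.
  move=> hle.
  have : (lw s k * Num.sqrt (varL s)) ^+ 2 <= eta_BCV ^+ 2.
    by rewrite ler_sqr // nnegrE //; apply: le_trans hle.
  rewrite exprMn hsq; lra.
have -> : varL s = 0 by apply/eqP; rewrite eq_le hv hv0.
lra.
Qed.

Definition dlw {R : realType} (s : seq R) k := lw s k - prevf (lw s) k.

Lemma dlw_cons {R : realType} (a : R) s k :
  dlw (a :: s) k = (1 - a) * dlw s k + a * prevf (dlw s) k.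
Proof.
rewrite /dlw; case: k => [|k] /=; rewrite !lw_cons /=; last by ring.
by ring.
Qed.

Lemma unimodal {R : realType} (s : seq R) : inI s ->
  exists m, (forall k, (k <= m)%N -> 0 <= dlw s k) /\
            (forall k, (m < k)%N -> dlw s k <= 0).
Proof.
elim: s => [|a s IH] hs.
  exists 0%N; split.
    by move=> k; rewrite leqn0 => /eqP ->; rewrite /dlw lw_nil /=; lra.
  move=> k hk; rewrite /dlw lw_nil; case: k hk => [//|k] _ /=.
  by rewrite lw_nil; case: k => [|k] /=; lra.
case/inI_cons: hs => /andP[a0 a1] /IH [m [hup hdn]].
have hpu : forall k, (k <= m)%N -> 0 <= prevf (dlw s) k.
  by case=> [|k] //= hk; apply: hup; apply: ltnW.
have hpd : forall k, (m.+1 < k)%N -> prevf (dlw s) k <= 0.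
  by case=> [|k] //= hk; apply: hdn.
have hu : forall k, (k <= m)%N -> 0 <= dlw (a :: s) k.
  move=> k hk; rewrite dlw_cons; have := hup k hk; have := hpu k hk; nra.
have hd : forall k, (m.+1 < k)%N -> dlw (a :: s) k <= 0.
  move=> k hk; rewrite dlw_cons; have := hdn k (ltnW hk); have := hpd k hk; nra.
case: (lerP 0 (dlw (a :: s) m.+1)) => h.
  exists m.+1; split; last by [].
  by move=> k; rewrite leq_eqVlt => /orP[/eqP->//|]; rewrite ltnS; apply: hu.
exists m; split => // k; rewrite leq_eqVlt => /orP[/eqP<-|]; [exact: ltW|exact: hd].
Qed.

Lemma sum_abs_unimodal {R : realType} (c : nat -> R) m N :
  (forall k, 0 <= c k) ->
  (forall k, (k <= m)%N -> 0 <= c k - prevf c k) ->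
  (forall k, (m < k)%N -> c k - prevf c k <= 0) ->
  \sum_(k < N) `|prevf c k - c k| <= 2 * c m.
Proof.
move=> c0 hu hd.
set N' := maxn N m.+1.
apply: le_trans (_ : \sum_(k < N') `|prevf c k - c k| <= _).
  apply: (@sum_le_ext _ (fun k => `|prevf c k - c k|)); first exact: leq_maxl.
  by move=> k; apply: normr_ge0.
rewrite -(big_mkord xpredT (fun k => `|prevf c k - c k|)).
rewrite (big_cat_nat (leq0n m.+1) (leq_maxr N m.+1)) /=.
pose f := prevf c.
have E1 : \sum_(0 <= i < m.+1) `|prevf c i - c i| = \sum_(0 <= i < m.+1) (f i.+1 - f i).
  apply: eq_big_nat => i /andP[_ hi]; rewrite distrC ger0_norm //.
  by apply: hu; rewrite -ltnS.
have E2 : \sum_(m.+1 <= i < N') `|prevf c i - c i| = - \sum_(m.+1 <= i < N') (f i.+1 - f i).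
  rewrite -sumrN; apply: eq_big_nat => i /andP[hi _]; rewrite ger0_norm.
    by rewrite /f /= opprB.
  have := hd i hi; lra.
rewrite E1 E2 !telescope_sumr // ?leq_maxr // /f /=.
have := c0 (N'.-1); clear E1 E2; case: N' => [|n'] /=; lra.
Qed.

Definition PP {R : realType} n (z : 'I_n -> R) : {poly R} := \prod_(i < n) Fp (z i).

Lemma rest_PL {R : realType} n (z : 'I_n -> R) (i0 : 'I_n) :
  \prod_(l < n | l != i0) Fp (z l) =
  PL [seq z l | l <- enum [pred l : 'I_n | l != i0]].
Proof. by rewrite /PL big_map big_enum. Qed.

Lemma rest_var {R : realType} n (z : 'I_n -> R) (i0 : 'I_n) :
  varL [seq z l | l <- enum [pred l : 'I_n | l != i0]] =
  pvar z - z i0 * (1 - z i0).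
Proof.
rewrite /varL big_map big_enum /pvar [in RHS](bigD1 i0) //= addrC addrK.
by apply: eq_bigl => l; rewrite inE.
Qed.

Lemma step_bound {R : realType} n (z z' : 'I_n -> R) (i0 : 'I_n) e :
  (forall l, 0 <= z l <= 1) ->
  (forall l, l != i0 -> z' l = z l) -> z' i0 = z i0 + e ->
  2^-1 * \sum_(k < n.+1) `|(PP z')`_k - (PP z)`_k|
    <= `|e| * (C_BCV / Num.sqrt (pvar z + 1)).
Proof.
move=> hz hz' he.
set s := [seq z l | l <- enum [pred l : 'I_n | l != i0]].
have hs : inI s by move=> a /mapP [l _ ->].
have hR : \prod_(l < n | l != i0) Fp (z' l) = PL s.
  rewrite -rest_PL; apply: eq_bigr => l hl; by rewrite hz'.
have E : forall k, (PP z')`_k - (PP z)`_k = e * (prevf (lw s) k - lw s k).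
  move=> k; rewrite /PP (bigD1 i0) //= [in X in _ - X](bigD1 i0) //= hR rest_PL -/s.
  rewrite !coef_FpM he /lw; ring.
under eq_bigr do rewrite E normrM.
rewrite -mulr_sumr mulrA (mulrC 2^-1) -mulrA ler_wpM2l //.
have [m [hu hd]] := unimodal hs.
have hsum := @sum_abs_unimodal _ (lw s) m n.+1 (fun k => lw_ge0 k hs) hu hd.
apply: le_trans (_ : lw s m <= _).
  rewrite mulrC ler_pdivrMr //; lra.
have hvz : 0 <= pvar z.
  by rewrite /pvar; apply: sumr_ge0 => l _; apply: g_ge0.
have hsq : 0 < Num.sqrt (pvar z + 1) by rewrite sqrtr_gt0; lra.
rewrite ler_pdivlMr //.
have hC := lw_C m hs.
rewrite rest_var in hC.
have hg := g_le (z i0).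
have h0 := lw_ge0 m hs.
have hC0 := @CBCV_ge0 R.
rewrite -ler_sqr ?nnegrE //; last by apply: mulr_ge0 => //; apply: ltW.
rewrite exprMn sqr_sqrtr; last lra.
apply: le_trans hC; apply: ler_wpM2l; [apply: sqr_ge0|lra].
Qed.

Lemma inv_sqrt_eps {R : realType} (M eps : R) : 1 <= M -> 0 <= eps -> eps <= 2^-1 ->
  1 / Num.sqrt (M - eps) <= 1 / Num.sqrt M + 2 * eps.
Proof.
move=> hM he0 he1.
set u := Num.sqrt (M - eps); set x := Num.sqrt M.
have hu2 : u ^+ 2 = M - eps by rewrite sqr_sqrtr //; lra.
have hx2 : x ^+ 2 = M by rewrite sqr_sqrtr //; lra.
have hu0 : 0 <= u by apply: sqrtr_ge0.
have hx0 : 0 <= x by apply: sqrtr_ge0.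
have hx1 : 1 <= x by rewrite -(expr1n _ 2) in hM; move: hM; rewrite -hx2 ler_sqr ?nnegrE //.
have hu1 : 2^-1 <= u.
  have : (2^-1 : R) ^+ 2 <= u ^+ 2 by rewrite hu2; lra.
  by rewrite ler_sqr ?nnegrE //; lra.
have hxu : u <= x by rewrite -ler_sqr ?nnegrE // hu2 hx2; lra.
have h1 : x - u <= eps.
  have : (x - u) * (x + u) = eps by rewrite -subr_sqr hx2 hu2; ring.
  have : 0 <= (x - u) * (x + u - 1) by apply: mulr_ge0; lra.
  have -> : (x - u) * (x + u - 1) = (x - u) * (x + u) - (x - u) by ring.
  lra.
have h3 : 1 <= 2 * u * x by nra.
have h4 : 0 <= eps * (2 * u * x - 1) by apply: mulr_ge0; lra.
have h2 : x <= u + 2 * eps * u * x.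
  have -> : 2 * eps * u * x = eps * (2 * u * x - 1) + eps by ring.
  lra.
have hup : 0 < u by lra.
have hxp : 0 < x by lra.
rewrite -subr_le0.
have -> : 1 / u - (1 / x + 2 * eps) = (x - u - 2 * eps * u * x) / (u * x) by field; lra.
apply: mulr_le0_ge0; first lra.
by rewrite invr_ge0; apply: mulr_ge0.
Qed.

Lemma term2 {R : realType} (x y h D : R) : 1 <= x -> 1 <= y -> 0 <= h ->
  y ^+ 2 - x ^+ 2 = h * D ->
  h / x <= 2 * h / (x + y) + h ^+ 2 * `|D|.
Proof.
move=> hx hy hh hD.
have hxy : 0 < x + y by lra.
have E : h / x - 2 * h / (x + y) = h * (y - x) / (x * (x + y)) by field; lra.
have E2 : y - x = h * D / (x + y) by rewrite -hD; field; lra.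
rewrite -subr_le0 opprD addrA E E2 subr_le0.
have hden : 1 <= x * (x + y) * (x + y) by nra.
have hD' : D <= `|D| by apply: ler_norm.
have -> : h * (h * D / (x + y)) / (x * (x + y)) = h ^+ 2 * D / (x * (x + y) * (x + y)) by field; lra.
rewrite ler_pdivrMr; last lra.
have h2 : 0 <= h ^+ 2 * `|D| by apply: mulr_ge0; [apply: sqr_ge0|apply: normr_ge0].
have h3 : h ^+ 2 * D <= h ^+ 2 * `|D| by apply: ler_wpM2l => //; apply: sqr_ge0.
nra.
Qed.

Definition Mj {R : realType} (A B : R) N (j : nat) : R := A + j%:R / N%:R * (B - A).

Lemma Mj_ge1 {R : realType} (A B : R) N j : 1 <= A -> 1 <= B -> (0 < N)%N -> (j <= N)%N ->
  1 <= Mj A B N j.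
Proof.
move=> hA hB hN hj; rewrite /Mj.
have hN' : 0 < N%:R :> R by rewrite ltr0n.
have t0 : 0 <= j%:R / N%:R :> R by apply: divr_ge0; rewrite ?ler0n // ltW.
have t1 : j%:R / N%:R <= 1 :> R by rewrite ler_pdivrMr // mul1r ler_nat.
nra.
Qed.

Lemma Mj_step {R : realType} (A B : R) N j : (0 < N)%N ->
  Mj A B N j.+1 - Mj A B N j = N%:R^-1 * (B - A).
Proof.
move=> hN; have hN' : N%:R != 0 :> R by rewrite pnatr_eq0 -lt0n.
by rewrite /Mj -addn1 natrD; field.
Qed.

Lemma sum_tele_sqrt {R : realType} (A B : R) N : 1 <= A -> 1 <= B -> (0 < N)%N ->
  \sum_(j < N) 2 * N%:R^-1 / (Num.sqrt (Mj A B N j) + Num.sqrt (Mj A B N j.+1))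
  = 2 / (Num.sqrt A + Num.sqrt B).
Proof.
move=> hA hB hN.
have hN' : N%:R != 0 :> R by rewrite pnatr_eq0 -lt0n.
have hNp : 0 < N%:R :> R by rewrite ltr0n.
have sa : 1 <= Num.sqrt A by rewrite -sqrtr1 ler_sqrt //; lra.
have sb : 1 <= Num.sqrt B by rewrite -sqrtr1 ler_sqrt //; lra.
case: (eqVneq A B) => [<-|hAB].
  rewrite (eq_bigr (fun _ => 2 * N%:R^-1 / (Num.sqrt A + Num.sqrt A))); last first.
    by move=> j _; rewrite /Mj subrr !mulr0 !addr0.
  rewrite sumr_const card_ord -mulr_natr.
  field; apply/andP; split => //; apply/eqP; lra.
have hBA : B - A != 0 by rewrite subr_eq0 eq_sym.
have E : forall j : 'I_N, 2 * N%:R^-1 / (Num.sqrt (Mj A B N j) + Num.sqrt (Mj A B N j.+1)) =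
   2 / (B - A) * (Num.sqrt (Mj A B N j.+1) - Num.sqrt (Mj A B N j)).
  move=> j.
  have h1 := Mj_ge1 hA hB hN (ltnW (ltn_ord j)).
  have h2 := Mj_ge1 hA hB hN (ltn_ord j).
  have s1 : 1 <= Num.sqrt (Mj A B N j) by rewrite -sqrtr1 ler_sqrt //; lra.
  have s2 : 1 <= Num.sqrt (Mj A B N j.+1) by rewrite -sqrtr1 ler_sqrt //; lra.
  have -> : Num.sqrt (Mj A B N j.+1) - Num.sqrt (Mj A B N j) =
     (N%:R^-1 * (B - A)) / (Num.sqrt (Mj A B N j) + Num.sqrt (Mj A B N j.+1)).
    rewrite -(@Mj_step _ A B N j hN).
    have ha : Num.sqrt (Mj A B N j) ^+ 2 = Mj A B N j by rewrite sqr_sqrtr //; lra.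
    have hb : Num.sqrt (Mj A B N j.+1) ^+ 2 = Mj A B N j.+1 by rewrite sqr_sqrtr //; lra.
    set a := Num.sqrt (Mj A B N j) in s1 ha *; set b := Num.sqrt (Mj A B N j.+1) in s2 hb *.
    rewrite -ha -hb subr_sqr; field; apply/eqP; lra.
  field; apply/and3P; split => //; apply/eqP; lra.
rewrite (eq_bigr _ (fun j _ => E j)) -mulr_sumr.
rewrite -(big_mkord xpredT (fun j => Num.sqrt (Mj A B N j.+1) - Num.sqrt (Mj A B N j))).
rewrite telescope_sumr //.
have -> : Mj A B N N = B by rewrite /Mj divff // mul1r; ring.
have -> : Mj A B N 0 = A by rewrite /Mj mul0r mul0r addr0.
have ha : Num.sqrt A ^+ 2 = A by rewrite sqr_sqrtr //; lra.
have hb : Num.sqrt B ^+ 2 = B by rewrite sqr_sqrtr //; lra.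
have hne : Num.sqrt B - Num.sqrt A != 0.
  apply/eqP => h; move/eqP: hBA; apply; rewrite -ha -hb.
  have -> : Num.sqrt B = Num.sqrt A by lra.
  by rewrite subrr.
have sa0 : 0 < Num.sqrt A + Num.sqrt B by lra.
move: hne sa0 ha hb; set a := Num.sqrt A; set b := Num.sqrt B => hne sa0 ha hb.
rewrite -ha -hb subr_sqr; field; apply/andP; split => //; apply/eqP; lra.
Qed.

Lemma FA {R : realType} (A B eps : R) N : 1 <= A -> 1 <= B -> (0 < N)%N ->
  0 <= eps -> eps <= 2^-1 ->
  \sum_(j < N) N%:R^-1 / Num.sqrt (Mj A B N j - eps)
  <= 2 / (Num.sqrt A + Num.sqrt B) + 2 * eps + `|B - A| / N%:R.
Proof.
move=> hA hB hN he0 he1.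
have hNp : 0 < N%:R :> R by rewrite ltr0n.
have hh : 0 <= N%:R^-1 :> R by rewrite invr_ge0 ltW.
apply: le_trans (_ : \sum_(j < N) (2 * N%:R^-1 / (Num.sqrt (Mj A B N j) + Num.sqrt (Mj A B N j.+1))
    + (N%:R^-1 ^+ 2 * `|B - A| + N%:R^-1 * (2 * eps))) <= _).
  apply: ler_sum => j _.
  have h1 := Mj_ge1 hA hB hN (ltnW (ltn_ord j)).
  have h2 := Mj_ge1 hA hB hN (ltn_ord j).
  have s1 : 1 <= Num.sqrt (Mj A B N j) by rewrite -sqrtr1 ler_sqrt //; lra.
  have s2 : 1 <= Num.sqrt (Mj A B N j.+1) by rewrite -sqrtr1 ler_sqrt //; lra.
  have hie := inv_sqrt_eps h1 he0 he1.
  have ht := @term2 _ (Num.sqrt (Mj A B N j)) (Num.sqrt (Mj A B N j.+1)) N%:R^-1 (B - A) s1 s2 hh.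
  rewrite !sqr_sqrtr in ht; try lra.
  have ht' := ht (Mj_step A B j hN).
  have : N%:R^-1 / Num.sqrt (Mj A B N j - eps) <= N%:R^-1 * (1 / Num.sqrt (Mj A B N j) + 2 * eps).
    set s := Num.sqrt (Mj A B N j - eps).
    have -> : N%:R^-1 / s = N%:R^-1 * (1 / s) by rewrite mul1r.
    by apply: ler_wpM2l.
  rewrite mulrDr mul1r; lra.
rewrite big_split /= sum_tele_sqrt // sumr_const card_ord.
have -> : (N%:R^-1 ^+ 2 * `|B - A| + N%:R^-1 * (2 * eps)) *+ N
   = `|B - A| / N%:R + 2 * eps by rewrite -mulr_natr; field; apply/eqP; lra.
lra.
Qed.

Lemma g_lip {R : realType} (x e : R) : 0 <= x <= 1 -> 0 <= x + e <= 1 ->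
  x * (1 - x) - `|e| <= (x + e) * (1 - (x + e)).
Proof.
move=> /andP[h0 h1] /andP[h2 h3].
have -> : (x + e) * (1 - (x + e)) = x * (1 - x) + e * (1 - 2 * x - e) by ring.
case: (lerP 0 e) => he.
  rewrite ger0_norm //; have : 0 <= e * (2 - 2 * x - e) by apply: mulr_ge0; lra.
  have -> : e * (2 - 2 * x - e) = e * (1 - 2 * x - e) + e by ring.
  lra.
rewrite ltr0_norm //; have : 0 <= (- e) * (2 * x + e) by apply: mulr_ge0; lra.
have -> : (- e) * (2 * x + e) = e * (1 - 2 * x - e) - e by ring.
lra.
Qed.

Lemma g_concave {R : realType} (x y t : R) : 0 <= t <= 1 ->
  (1 - t) * (x * (1 - x)) + t * (y * (1 - y)) <=
  (x + t * (y - x)) * (1 - (x + t * (y - x))).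
Proof.
move=> /andP[t0 t1].
have -> : (x + t * (y - x)) * (1 - (x + t * (y - x))) =
  (1 - t) * (x * (1 - x)) + t * (y * (1 - y)) + t * (1 - t) * (y - x) ^+ 2 by ring.
rewrite lerDl; apply: mulr_ge0; [apply: mulr_ge0; lra|apply: sqr_ge0].
Qed.

Definition rr {R : realType} n (p q : 'I_n -> R) N (j : nat) : 'I_n -> R :=
  fun l => p l + (j%:R / N%:R) * (q l - p l).

Definition zz {R : realType} n (p q : 'I_n -> R) N (j i : nat) : 'I_n -> R :=
  fun l => if (l < i)%N then rr p q N j.+1 l else rr p q N j l.

Lemma tN_bounds {R : realType} N j : (0 < N)%N -> (j <= N)%N ->
  0 <= j%:R / N%:R :> R /\ j%:R / N%:R <= 1 :> R.
Proof.
move=> hN hj; have hN' : 0 < N%:R :> R by rewrite ltr0n.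
split; first by apply: divr_ge0; rewrite ?ler0n // ltW.
by rewrite ler_pdivrMr // mul1r ler_nat.
Qed.

Lemma rr_in {R : realType} n (p q : 'I_n -> R) N j l : (0 < N)%N -> (j <= N)%N ->
  (forall i, 0 <= p i <= 1) -> (forall i, 0 <= q i <= 1) ->
  0 <= rr p q N j l <= 1.
Proof.
move=> hN hj hp hq; have [t0 t1] := tN_bounds (R := R) hN hj.
have /andP[p0 p1] := hp l; have /andP[q0 q1] := hq l.
rewrite /rr; set t := _ / _ in t0 t1 *.
apply/andP; split; nra.
Qed.

Lemma zz_in {R : realType} n (p q : 'I_n -> R) N j i l : (0 < N)%N -> (j < N)%N ->
  (forall i, 0 <= p i <= 1) -> (forall i, 0 <= q i <= 1) ->
  0 <= zz p q N j i l <= 1.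
Proof.
move=> hN hj hp hq; rewrite /zz; case: ifP => _; apply: rr_in => //.
exact: ltnW.
Qed.

Lemma rr_step {R : realType} n (p q : 'I_n -> R) N j l : (0 < N)%N ->
  rr p q N j.+1 l = rr p q N j l + (q l - p l) / N%:R.
Proof.
move=> hN; have hN' : N%:R != 0 :> R by rewrite pnatr_eq0 -lt0n.
by rewrite /rr -addn1 natrD; field.
Qed.

Lemma pvar_rr {R : realType} n (p q : 'I_n -> R) N j : (0 < N)%N -> (j <= N)%N ->
  (1 - j%:R / N%:R) * pvar p + j%:R / N%:R * pvar q <= pvar (rr p q N j).
Proof.
move=> hN hj; have [t0 t1] := tN_bounds (R := R) hN hj.
rewrite /pvar !mulr_sumr -big_split /=; apply: ler_sum => l _.
by apply: g_concave; apply/andP.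
Qed.

Lemma pvar_zz {R : realType} n (p q : 'I_n -> R) N j i : (0 < N)%N -> (j < N)%N ->
  (forall i, 0 <= p i <= 1) -> (forall i, 0 <= q i <= 1) ->
  pvar (rr p q N j) - (\sum_(l < n) `|q l - p l|) / N%:R <= pvar (zz p q N j i).
Proof.
move=> hN hj hp hq.
have hN' : 0 < N%:R :> R by rewrite ltr0n.
rewrite /pvar mulr_suml -sumrB; apply: ler_sum => l _.
rewrite /zz; case: ifP => _; last first.
  have : 0 <= `|q l - p l| / N%:R by apply: divr_ge0; [apply: normr_ge0|apply: ltW].
  lra.
have he : `|(q l - p l) / N%:R| = `|q l - p l| / N%:R.
  by rewrite normrM normfV (@ger0_norm _ N%:R) // ler0n.
rewrite rr_step // -he; apply: g_lip.
- by apply: rr_in => //; apply: ltnW.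
- by rewrite -rr_step //; apply: rr_in.
Qed.

Lemma inv_sqrt_mono {R : realType} (x y c : R) : 0 < x -> x <= y -> 0 <= c ->
  c / Num.sqrt y <= c / Num.sqrt x.
Proof.
move=> hx hxy hc; apply: ler_wpM2l => //.
have sx : 0 < Num.sqrt x by rewrite sqrtr_gt0.
have sy : 0 < Num.sqrt y by rewrite sqrtr_gt0; apply: lt_le_trans hxy.
rewrite lef_pV2 ?posrE //; rewrite ler_sqrt //; apply: ltW; exact: lt_le_trans hxy.
Qed.

Lemma PP_ext {R : realType} n (z z' : 'I_n -> R) : (forall l, z l = z' l) -> PP z = PP z'.
Proof. by move=> h; apply: eq_bigr => l _; rewrite h. Qed.

Lemma tele_PP {R : realType} n (p q : 'I_n -> R) N k : (0 < N)%N ->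
  (PP q)`_k - (PP p)`_k =
  \sum_(j < N) \sum_(i < n) ((PP (zz p q N j i.+1))`_k - (PP (zz p q N j i))`_k).
Proof.
move=> hN; have hN' : N%:R != 0 :> R by rewrite pnatr_eq0 -lt0n.
have inner : forall j, \sum_(i < n) ((PP (zz p q N j i.+1))`_k - (PP (zz p q N j i))`_k)
   = (PP (rr p q N j.+1))`_k - (PP (rr p q N j))`_k.
  move=> j.
  rewrite -(big_mkord xpredT (fun i => (PP (zz p q N j i.+1))`_k - (PP (zz p q N j i))`_k)).
  rewrite telescope_sumr //.
  rewrite (@PP_ext _ _ (zz p q N j n) (rr p q N j.+1)); last by move=> l; rewrite /zz ltn_ord.
  by rewrite (@PP_ext _ _ (zz p q N j 0) (rr p q N j)).
rewrite (eq_bigr _ (fun (j : 'I_N) _ => inner j)).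
rewrite -(big_mkord xpredT (fun j => (PP (rr p q N j.+1))`_k - (PP (rr p q N j))`_k)).
rewrite telescope_sumr //.
rewrite (@PP_ext _ _ (rr p q N N) q); last by move=> l; rewrite /rr divff // mul1r; ring.
by rewrite (@PP_ext _ _ (rr p q N 0) p) // => l; rewrite /rr mul0r mul0r addr0.
Qed.

Lemma main_N {R : realType} n (p q : 'I_n -> R) N :
  (forall i, 0 <= p i <= 1) -> (forall i, 0 <= q i <= 1) -> (0 < N)%N ->
  (\sum_(i < n) `|p i - q i|) / N%:R <= 2^-1 ->
  TV_pb p q <= C_BCV * (\sum_(i < n) `|p i - q i|) *
    (2 / (Num.sqrt (pvar p + 1) + Num.sqrt (pvar q + 1))
     + 2 * ((\sum_(i < n) `|p i - q i|) / N%:R)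
     + `|(pvar q + 1) - (pvar p + 1)| / N%:R).
Proof.
move=> hp hq hN heps.
have hNp : 0 < N%:R :> R by rewrite ltr0n.
set Dl := \sum_(i < n) `|p i - q i| in heps *.
have hDl : Dl = \sum_(l < n) `|q l - p l| by apply: eq_bigr => l _; rewrite distrC.
have hD0 : 0 <= Dl by apply: sumr_ge0 => l _; apply: normr_ge0.
set eps := Dl / N%:R in heps *.
have he0 : 0 <= eps by apply: divr_ge0 => //; apply: ltW.
set A := pvar p + 1; set B := pvar q + 1.
have hvp : 0 <= pvar p by apply: sumr_ge0 => l _; apply: g_ge0.
have hvq : 0 <= pvar q by apply: sumr_ge0 => l _; apply: g_ge0.
have hA : 1 <= A by rewrite /A; lra.
have hB : 1 <= B by rewrite /B; lra.
set D := fun (j i : nat) k => (PP (zz p q N j i.+1))`_k - (PP (zz p q N j i))`_k.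
have step1 : TV_pb p q = 2^-1 * \sum_(k < n.+1) `|\sum_(j < N) \sum_(i < n) D j i k|.
  rewrite /TV_pb; congr (_ * _); apply: eq_bigr => k _.
  by rewrite !pbin_poly distrC -/(PP p) -/(PP q) (tele_PP p q k hN).
have step2 : TV_pb p q <= \sum_(j < N) \sum_(i < n) (2^-1 * \sum_(k < n.+1) `|D j i k|).
  rewrite step1.
  apply: le_trans (_ : 2^-1 * \sum_(k < n.+1) \sum_(j < N) \sum_(i < n) `|D j i k| <= _).
    apply: ler_wpM2l; first lra.
    apply: ler_sum => k _.
    apply: le_trans (ler_norm_sum _ _ _) _; apply: ler_sum => j _.
    exact: ler_norm_sum.
  have -> : \sum_(j < N) \sum_(i < n) (2^-1 * \sum_(k < n.+1) `|D j i k|)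
     = 2^-1 * \sum_(j < N) \sum_(i < n) \sum_(k < n.+1) `|D j i k|.
    by rewrite mulr_sumr; apply: eq_bigr => j _; rewrite mulr_sumr.
  apply: ler_wpM2l; first lra.
  rewrite [X in _ <= X](eq_bigr (fun j : 'I_N => \sum_(k < n.+1) \sum_(i < n) `|D j i k|)); last first.
    by move=> j _; rewrite exchange_big.
  by rewrite [X in _ <= X]exchange_big.
have Mj_eq : forall j : nat, Mj A B N j =
    1 + ((1 - j%:R / N%:R) * pvar p + j%:R / N%:R * pvar q).
  by move=> j; rewrite /Mj /A /B; ring.
have step3 : forall (j : 'I_N) (i : 'I_n),
   2^-1 * \sum_(k < n.+1) `|D j i k| <=
   `|q i - p i| / N%:R * (C_BCV / Num.sqrt (Mj A B N j - eps)).
  move=> j i.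
  have hz : forall l, 0 <= zz p q N j i l <= 1 by move=> l; apply: zz_in.
  have hz' : forall l, l != i -> zz p q N j i.+1 l = zz p q N j i l.
    move=> l hl; rewrite /zz ltnS leq_eqVlt.
    by have -> : (nat_of_ord l == nat_of_ord i) = false by apply/negbTE.
  have he : zz p q N j i.+1 i = zz p q N j i i + (q i - p i) / N%:R.
    by rewrite /zz ltnSn ltnn rr_step.
  have := step_bound hz hz' he.
  have -> : `|(q i - p i) / N%:R| = `|q i - p i| / N%:R.
    by rewrite normrM normfV (@ger0_norm _ N%:R) // ler0n.
  move=> h; apply: le_trans h _.
  apply: ler_wpM2l; first by apply: divr_ge0; [apply: normr_ge0|apply: ltW].
  apply: inv_sqrt_mono; last exact: CBCV_ge0.
    have := Mj_ge1 hA hB hN (ltnW (ltn_ord j)); lra.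
  have h1 := @pvar_zz _ n p q N j i hN (ltn_ord j) hp hq.
  have h2 := pvar_rr p q hN (ltnW (ltn_ord j)).
  rewrite -hDl -/eps in h1.
  rewrite Mj_eq; lra.
apply: le_trans step2 _.
apply: le_trans (_ : \sum_(j < N) \sum_(i < n)
   `|q i - p i| / N%:R * (C_BCV / Num.sqrt (Mj A B N j - eps)) <= _).
  by apply: ler_sum => j _; apply: ler_sum => i _; apply: step3.
have -> : \sum_(j < N) \sum_(i < n) `|q i - p i| / N%:R * (C_BCV / Num.sqrt (Mj A B N j - eps))
   = C_BCV * Dl * \sum_(j < N) N%:R^-1 / Num.sqrt (Mj A B N j - eps).
  rewrite mulr_sumr; apply: eq_bigr => j _.
  by rewrite -mulr_suml -mulr_suml -hDl; ring.
apply: ler_wpM2l; first by apply: mulr_ge0 => //; apply: CBCV_ge0.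
exact: FA.
Qed.

Unset Implicit Arguments. Set Strict Implicit.

Theorem theorem6 (R : realType) (n : nat) (p q : 'I_n -> R) :
  (1 <= n)%N ->
  (forall i, 0 <= p i <= 1) -> (forall i, 0 <= q i <= 1) ->
  TV_pb p q <=
    2 * C_BCV * (\sum_(i < n) `|p i - q i|) /
    (Num.sqrt (pvar p + 1) + Num.sqrt (pvar q + 1)).
Proof.
move=> _ hp hq.
set Dl := \sum_(i < n) `|p i - q i|.
set ab := Num.sqrt (pvar p + 1) + Num.sqrt (pvar q + 1).
set W := `|(pvar q + 1) - (pvar p + 1)|.
have hD0 : 0 <= Dl by apply: sumr_ge0 => l _; apply: normr_ge0.
have hvp : 0 <= pvar p by apply: sumr_ge0 => l _; apply: g_ge0.
have hvq : 0 <= pvar q by apply: sumr_ge0 => l _; apply: g_ge0.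
have hab : 0 < ab.
  have s1 : 0 <= Num.sqrt (pvar p + 1) by apply: sqrtr_ge0.
  have s2 : 0 < Num.sqrt (pvar q + 1) by rewrite sqrtr_gt0; lra.
  rewrite /ab; lra.
have hC := @CBCV_ge0 R.
have hW : 0 <= W by apply: normr_ge0.
set K := C_BCV * Dl * (2 * Dl + W).
have hK : 0 <= K by apply: mulr_ge0; [apply: mulr_ge0|lra].
rewrite leNgt; apply/negP => hlt.
set d := TV_pb p q - 2 * C_BCV * Dl / ab.
have hd : 0 < d by rewrite /d subr_gt0.
have hKd : 0 <= K / d by apply: divr_ge0 => //; apply: ltW.
have h2D : 0 <= 2 * Dl by lra.
set N := ((Num.Def.archi_bound (K / d)) + (Num.Def.archi_bound (2 * Dl))).+1.
have hN : (0 < N)%N by [].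
have hNp : 0 < N%:R :> R by rewrite ltr0n.
have hN1 : K / d < N%:R.
  apply: lt_le_trans (archi_boundP hKd) _; rewrite ler_nat /N.
  by apply: leqW; apply: leq_addr.
have hN2 : 2 * Dl < N%:R.
  apply: lt_le_trans (archi_boundP h2D) _; rewrite ler_nat /N.
  by apply: leqW; apply: leq_addl.
have heps : Dl / N%:R <= 2^-1.
  rewrite ler_pdivrMr //; lra.
have := main_N hp hq hN heps; rewrite -/Dl -/W -/ab.
have -> : C_BCV * Dl * (2 / ab + 2 * (Dl / N%:R) + W / N%:R)
   = 2 * C_BCV * Dl / ab + K / N%:R.
  rewrite /K; field; apply/andP; split; apply/eqP; lra.
have : K / N%:R < d.
  rewrite ltr_pdivrMr //.
  by rewrite ltr_pdivrMr // mulrC in hN1.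
rewrite /d; lra.
Qed.
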